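(* Let $\alpha:=\int_{\Omega}\frac{dx}{p(x)}$ and $e:=\exp(1)$. If $\alpha e<m<l$, then \[ \Vert u\Vert_{mp(x)}\leq\Vert u\Vert_{lp(x)}\quad\forall\,u\in L^{lp(x)}(\Omega). \]
   Context: $\Omega\subset\mathbb{R}^N$ is a bounded domain; $p\in C^{1}(\overline{\Omega})$ with $1<\inf p\le\sup p<\infty$. For a continuous exponent $r$, $\Vert u\Vert_{r(x)}=\inf\{\gamma>0:\int_{\Omega}|u/\gamma|^{r(x)}\frac{dx}{r(x)}\leq1\}$ (Luxemburg norm), and $L^{r(x)}(\Omega)$ is the space of measurable $u$ with $\int_\Omega|u|^{r(x)}dx<\infty$. *)

(* Defs.v *)
From HB Require Import structures.
From mathcomp Require Import all_boot all_order all_algebra.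
From mathcomp Require Import all_classical all_reals all_analysis.
Set Implicit Arguments. Unset Strict Implicit. Unset Printing Implicit Defensive.
Import Order.TTheory GRing.Theory Num.Theory.
Import numFieldNormedType.Exports.
Local Open Scope classical_set_scope.
Local Open Scope ring_scope.

(* R^N is modelled as the row-vector type 'rV[R]_N (with its normed/topological
   structure from matrix_normedtype).  We equip it with the Borel sigma-algebra,
   i.e. the sigma-algebra generated by the coordinate maps. *)
Definition rv_coord (R : realType) (N : nat) (i : 'I_N) (x : 'rV[R]_N) : R :=
  x ord0 i.

Section rV_measurable.
Context (R : realType) (N : nat).
Let coors : 'I_N -> 'rV[R]_N -> R := @rv_coord R N.
Let s0 : g_sigma_preimage coors set0.
Proof. exact: sigma_algebra0. Qed.
Let sC A : g_sigma_preimage coors A -> g_sigma_preimage coors (~` A).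
Proof. exact: sigma_algebraC. Qed.
Let sU (F : (set 'rV[R]_N)^nat) : (forall i, g_sigma_preimage coors (F i)) ->
  g_sigma_preimage coors (\bigcup_i (F i)).
Proof. exact: sigma_algebra_bigcup. Qed.
HB.instance Definition _ := @isMeasurable.Build (measure_tuple_display default_measure_display)
  'rV[R]_N (g_sigma_preimage coors) s0 sC sU.
End rV_measurable.

(* By uniqueness of
   the extension, this characterizes Lebesgue measure on Borel sets. *)
Definition is_lebesgue_measureN (R : realType) (N : nat)
    (mu : {measure set 'rV[R]_N -> \bar R}) : Prop :=
  forall a b : 'rV[R]_N, (forall i, a ord0 i <= b ord0 i) ->
    mu [set x | forall i, a ord0 i <= x ord0 i <= b ord0 i] =
    (\prod_(i < N) (b ord0 i - a ord0 i))%:E.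

Definition bounded_domain (R : realType) (N : nat) (Omega : set 'rV[R]_N) :=
  [/\ Omega !=set0, open Omega, connected Omega & bounded_set Omega].

Definition C1_closure (R : realType) (N : nat) (Omega : set 'rV[R]_N)
    (p : 'rV[R]_N -> R) : Prop :=
  [/\ forall x, Omega x -> differentiable p x,
      {within closure Omega, continuous p} &
      forall i : 'I_N, exists g : 'rV[R]_N -> R,
        {within closure Omega, continuous g} /\
        forall x, Omega x -> 'D_(delta_mx ord0 i) p x = g x].

Definition lux_norm (R : realType) (N : nat)
    (mu : {measure set 'rV[R]_N -> \bar R}) (Omega : set 'rV[R]_N)
    (r : 'rV[R]_N -> R) (u : 'rV[R]_N -> R) : \bar R :=
  ereal_inf [set g%:E | g in [set g : R | 0 < g /\
     (\int[mu]_(x in Omega) ((`|u x / g| `^ r x) / r x)%:E <= 1)%E]].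

Definition in_Lvar (R : realType) (N : nat)
    (mu : {measure set 'rV[R]_N -> \bar R}) (Omega : set 'rV[R]_N)
    (r : 'rV[R]_N -> R) (u : 'rV[R]_N -> R) : Prop :=
  measurable_fun Omega u /\
  (\int[mu]_(x in Omega) (`|u x| `^ r x)%:E < +oo)%E.

(* Main.v *)
Require Import Defs.
From HB Require Import structures.
From mathcomp Require Import all_boot all_order all_algebra.
From mathcomp Require Import all_classical all_reals all_analysis.
From mathcomp Require Import lra ring measurable_realfun.
Import Order.TTheory GRing.Theory Num.Theory.
Import numFieldNormedType.Exports.
Local Open Scope classical_set_scope.
Local Open Scope ring_scope.

Section S.
Variables (R : realType) (N : nat).

Lemma mcoord (i : 'I_N) : measurable_fun [set: 'rV[R]_N] (@rv_coord R N i).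
Proof.
move=> _ Y mY; rewrite setTI; apply: sub_sigma_algebra => /=.
rewrite -bigcup_seq/=; exists i => /=; first by rewrite mem_index_enum.
by exists Y => //; rewrite setTI.
Qed.

Lemma ballE (x y : 'rV[R]_N) e : ball x e y <-> (0 < e /\ forall i, `|x ord0 i - y ord0 i| < e).
Proof.
rewrite /ball /=. split.
- move=> [e0 h]; split => // i; have := h ord0 i. by [].
- move=> [e0 h]; split => // i j; rewrite (ord1 i); exact: h.
Qed.

Definition box (c : 'rV[R]_N) (r : R) := [set y : 'rV[R]_N | forall i, `|c ord0 i - y ord0 i| < r].

Lemma box_meas c r : measurable (box c r).
Proof.
have -> : box c r = \bigcap_(i in [set: 'I_N]) (@rv_coord R N i @^-1` [set z | `|c ord0 i - z| < r]).
  by apply/seteqP; split => y /= h i; [move=> _|]; apply: h.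
apply: fin_bigcap_measurable; first exact: finite_finset.
move=> i _; rewrite -[X in measurable X]setTI; apply: mcoord => //.
rewrite (_ : [set z | _] = `](c ord0 i - r), (c ord0 i + r)[%classic); first exact: measurable_itv.
by apply/seteqP; split => z /=; rewrite in_itv /= ltr_distlC.
Qed.

Lemma open_meas (A : set 'rV[R]_N) : open A -> measurable A.
Proof.
move=> oA.
pose F := fun q : 'rV[rat]_N * rat =>
  if `[< box (map_mx ratr q.1) (ratr q.2) `<=` A >] then box (map_mx ratr q.1) (ratr q.2) else set0.
have -> : A = \bigcup_q F q.
  apply/seteqP; split; last first.
    move=> x [q _]; rewrite /F; case: asboolP => [h|_ //]; exact: h.
  move=> x Ax.
  have : nbhs x A by move: oA; rewrite openE; apply.
  move=> /nbhs_ballP [e e0 hb].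
  have [r /andP[r0 re]] : exists r : rat, ratr r \in `]0, e / 2[.
    by apply: rat_in_itvoo; rewrite divr_gt0.
  have hq : forall i : 'I_N, exists q : rat, ratr q \in `](x ord0 i - ratr r), (x ord0 i + ratr r)[.
    by move=> i; apply: rat_in_itvoo; rewrite ltrBlDr -addrA ltrDl addr_gt0.
  have [f hf] := choice hq.
  have boxA : box (map_mx ratr (\row_i f i)) (ratr r) `<=` A.
    move=> y hy; apply: hb; apply/ballE; split => // i.
    have := hy i; rewrite !mxE => h1.
    have := hf i; rewrite in_itv /= => /andP[h2 h3].
    rewrite (le_lt_trans (ler_distD (ratr (f i)) _ _)) //.
    have -> : e = e / 2 + e / 2 by rewrite -splitr.
    apply: ltrD; last by apply: lt_trans h1 _.
    rewrite distrC (@lt_trans _ _ (ratr r)) //.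
    rewrite ltr_distlC; apply/andP; split; lra.
  exists (\row_i f i, r) => //.
  rewrite /F /=; case: asboolP => // _ i; rewrite !mxE.
  have := hf i; rewrite in_itv /= => /andP[h2 h3].
  rewrite ltr_distlC; apply/andP; split; lra.
apply: countable_bigcupT_measurable; first exact: countableP.
move=> q; rewrite /F; case: asboolP => _ //; exact: box_meas.
Qed.
End S.

Lemma cont_meas (R : realType) N (A : set 'rV[R]_N) (f : 'rV[R]_N -> R) : open A ->
  (forall x, A x -> {for x, continuous f}) -> measurable_fun A f.
Proof.
move=> oA cf; apply: (measurability _ (measurable_realfun.RGenOpens.measurableE R)).
move=> _ [_ [a [b ->]] <-]; apply: open_meas.
rewrite openE => x [Ax /= fx].
rewrite /interior; apply: filterI; first by move: oA; rewrite openE; apply.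
apply: (cf x Ax); apply: open_nbhs_nbhs; split => //; exact: interval_open.
Qed.

Lemma mpow2 d (T : measurableType d) (R : realType) (D : set T) (f g : T -> R) :
  measurable D -> measurable_fun D f -> measurable_fun D g ->
  measurable_fun D (fun x => f x `^ g x).
Proof.
move=> mD mf mg; rewrite /powR.
apply: measurable_fun_if => //.
- by apply: measurable_fun_eqr => //; exact: measurable_cst.
- have mD' : measurable (D `&` (fun x => f x == 0) @^-1` [set true]).
    by apply: (@measurable_fun_eqr _ _ _ D f (fun=> 0) mf (measurable_cst _)).
  rewrite (_ : (fun x => (g x == 0)%:R) = fun x => if g x == 0 then 1 else 0).
    apply: measurable_fun_if => //.
    + apply: measurable_fun_eqr; last exact: measurable_cst.
      exact: measurable_funS mg.
  by apply/funext => x; case: (g x == 0).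
- have mD' : measurable (D `&` (fun x => f x == 0) @^-1` [set false]).
    by apply: (@measurable_fun_eqr _ _ _ D f (fun=> 0) mf (measurable_cst _)) => //; rewrite setTI.
  apply: measurableT_comp; first exact: measurable_expR.
  apply: measurable_funM; first exact: measurable_funS mg.
  apply: measurableT_comp; first exact: measurable_ln.
  exact: measurable_funS mf.
Qed.

Lemma young1 (R : realType) (z s : R) : 0 <= z -> 0 < s < 1 ->
  z `^ s <= s * z + (1 - s).
Proof.
move=> z0 /andP[s0 s1].
have [->|zn0] := eqVneq z 0.
  by rewrite powR0 ?gt_eqF // mulr0 add0r; lra.
have zp : 0 < z by rewrite lt_neqAle eq_sym zn0.
have s01 : s \in `[0, 1] by rewrite in_itv /=; apply/andP; split; lra.
have := @convex_expR R (Itv01 (ltW s0) (ltW s1)) (ln z) 0.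
rewrite !convRE /= lnK ?posrE // expR0 mulr0 addr0 mulr1 => h.
by rewrite /powR (negbTE zn0).
Qed.

Lemma keyineq (R : realType) (A m l : R) : 0 < A -> A * expR 1 < m -> m < l ->
  A / m <= (A / l) `^ (m / l).
Proof.
move=> A0 hAm hml.
have m0 : 0 < m by apply: lt_trans hAm; rewrite mulr_gt0 ?expR_gt0.
have l0 : 0 < l by apply: lt_trans hml.
rewrite /powR gt_eqF ?divr_gt0 //.
rewrite -[X in X <= _]lnK ?posrE ?divr_gt0 // ler_expR.
rewrite !ln_div ?posrE //.
set a := ln A; set b := ln m; set c := ln l.
have F1 : c - b <= l / m - 1.
  rewrite /c /b -ln_div ?posrE //.
  rewrite {1}(_ : l / m = 1 + (l / m - 1)); last by lra.
  apply: le_ln1Dx. have : 0 < l / m by rewrite divr_gt0. lra.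
have F2 : 1 + a < b.
  rewrite (_ : 1 + a = ln (expR 1) + a); last by rewrite expRK.
  rewrite /b /a -lnM ?posrE ?expR_gt0 //.
  by rewrite ltr_ln ?posrE ?mulr_gt0 ?expR_gt0 // mulrC.
have F1' : m * (c - b) <= l - m.
  have -> : l - m = m * (l / m - 1) by rewrite mulrBr mulrCA divff ?gt_eqF // mulr1 mulr1.
  by rewrite ler_pM2l.
have F2' : l - m <= (l - m) * (b - a).
  rewrite -[X in X <= _]mulr1 ler_pM2l ?subr_gt0 //; lra.
set q := m / l.
have hq : l * q = m by rewrite /q mulrCA divff ?gt_eqF // mulr1.
have H : l * (a - b) <= l * (q * (a - c)).
  rewrite mulrA hq. nra.
by rewrite ler_pM2l in H.
Qed.

Theorem mainTheorem13 (R : realType) (N : nat) (hN : (0 < N)%N)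
    (mu : {measure set 'rV[R]_N -> \bar R}) (hmu : is_lebesgue_measureN mu)
    (Omega : set 'rV[R]_N) (hOmega : bounded_domain Omega)
    (p : 'rV[R]_N -> R) (hpC1 : C1_closure Omega p)
    (hpbnd : exists pm pM : R, 1 < pm /\ forall x, Omega x -> pm <= p x <= pM)
    (m l : R)
    (hml : ((\int[mu]_(x in Omega) (1 / p x)%:E) * (expR 1)%:E < m%:E)%E)
    (hml' : m < l) :
  forall u : 'rV[R]_N -> R, in_Lvar mu Omega (fun x => (l * p x)%R) u ->
    (lux_norm mu Omega (fun x => (m * p x)%R) u <=
     lux_norm mu Omega (fun x => (l * p x)%R) u)%E.
Proof.
move=> u [mu_ _].
have [_ oO _ _] := hOmega.
have mO : measurable Omega := @open_meas R N Omega oO.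
have [dp _ _] := hpC1.
have mp : measurable_fun Omega p.
  by apply: cont_meas => // x Ox; exact: differentiable_continuous (dp x Ox).
have [pm [pM [pm1 hp]]] := hpbnd.
have p0 : forall x, Omega x -> 0 < p x.
  by move=> x Ox; have /andP[h _] := hp x Ox; lra.
have alpha0 : (0 <= \int[mu]_(x in Omega) (1 / p x)%:E)%E.
  by apply: integral_ge0 => x Ox; rewrite lee_fin divr_ge0 // ltW // p0.
have E0 : 0 < expR 1 :> R by rewrite expR_gt0.
have [a aE] : exists a : R, (\int[mu]_(x in Omega) (1 / p x)%:E)%E = a%:E.
  move: alpha0 hml; case: (\int[mu]_(x in Omega) (1 / p x)%:E)%E => [r _ _| _ | //].
    by exists r.
  by rewrite gt0_mulye ?lte_fin.
rewrite aE in alpha0 hml; rewrite lee_fin in alpha0; rewrite -EFinM lte_fin in hml.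
have m0 : 0 < m by have := mulr_ge0 alpha0 (ltW E0); lra.
have l0 : 0 < l by lra.
set A := (a + m / expR 1) / 2.
have hmE : m / expR 1 * expR 1 = m by rewrite divfK ?gt_eqF.
have mE0 : 0 < m / expR 1 by rewrite divr_gt0.
have aA : a <= A.
  have : a * expR 1 < m / expR 1 * expR 1 by rewrite hmE.
  by rewrite ltr_pM2r // => h; rewrite /A; lra.
have A0 : 0 < A by rewrite /A; lra.
have AE : A * expR 1 < m.
  have -> : A * expR 1 = (a * expR 1 + m / expR 1 * expR 1) / 2 by rewrite /A; ring.
  rewrite hmE; lra.
set lam := A / l.
have lam0 : 0 < lam by rewrite divr_gt0.
set s := m / l.
have s0 : 0 < s by rewrite divr_gt0.
have s1 : s < 1 by rewrite ltr_pdivrMr // mul1r.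
set K := (lam `^ s)^-1.
have K0 : 0 < K by rewrite invr_gt0 powR_gt0.
have Klam : K * lam `^ s = 1 by rewrite mulVf ?gt_eqF ?powR_gt0.
have key : A / m <= lam `^ s := @keyineq R A m l A0 AE hml'.
set c2 := K * (1 - s) / m.
have c20 : 0 <= c2 by rewrite /c2 divr_ge0 ?mulr_ge0 //; lra.
have final : K * lam + c2 * a <= 1.
  have h1 : c2 * a <= c2 * A by rewrite ler_wpM2l.
  have h2 : K * lam + c2 * A = K * (A / m).
    rewrite /c2 /lam /s; field; apply/andP; split; rewrite gt_eqF //.
  have h3 : K * (A / m) <= 1 by rewrite -Klam ler_pM2l.
  lra.
rewrite /lux_norm; apply: ereal_inf_le_tmp; apply: image_subset => g [g0 hg]; split => //.
set T := fun x => `|u x / g|.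
have mT : measurable_fun Omega T.
  apply: measurableT_comp; first exact: normr_measurable.
  by apply: measurable_funM => //; exact: measurable_cst.
have mI : forall c : R, 0 < c -> measurable_fun Omega (fun x => (c * p x)^-1).
  move=> c c0; apply: (@eq_measurable_fun _ _ _ _ _ (fun x => (c * p x) `^ (-1))).
    move=> x xO; have Ox : Omega x by rewrite -in_setE.
    by rewrite powR_inv1 // mulr_ge0 // ltW // p0.
  apply: (@mpow2 _ _ _ Omega (fun x => c * p x) (fun=> -1)) => //.
  by apply: measurable_funM => //; exact: measurable_cst.
have mPow c : measurable_fun Omega (fun x => T x `^ (c * p x)).
  apply: (@mpow2 _ _ _ Omega T (fun x => c * p x)) => //; apply: measurable_funM => //; exact: measurable_cst.
have mF c : 0 < c -> measurable_fun Omega (fun x => T x `^ (c * p x) / (c * p x)).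
  by move=> c0; apply: measurable_funM; [exact: mPow| exact: mI].
have mC : measurable_fun Omega (fun x => 1 / p x).
  apply: (@eq_measurable_fun _ _ _ _ _ (fun x => (1 * p x)^-1)).
    by move=> x _; rewrite mul1r div1r.
  exact: mI.
have pw : forall x, Omega x -> T x `^ (m * p x) / (m * p x) <=
    (K * lam) * (T x `^ (l * p x) / (l * p x)) + c2 * (1 / p x).
  move=> x Ox; have px := p0 x Ox.
  set Y := T x `^ (l * p x).
  have Y0 : 0 <= Y := powR_ge0 _ _.
  have hY : T x `^ (m * p x) = Y `^ s.
    rewrite /Y -powRrM /s; congr (_ `^ _); field; rewrite gt_eqF //.
  have core : Y `^ s <= K * (s * (lam * Y) + (1 - s)).
    have yg := @young1 R (lam * Y) s (mulr_ge0 (ltW lam0) Y0) (andb_true_intro (conj s0 s1)).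
    rewrite powRM // in yg; last exact: ltW.
    have -> : Y `^ s = K * (lam `^ s * Y `^ s) by rewrite mulrA Klam mul1r.
    by rewrite ler_pM2l.
  rewrite hY.
  have -> : K * lam * (Y / (l * p x)) + c2 * (1 / p x) =
      K * (s * (lam * Y) + (1 - s)) / (m * p x).
    rewrite /c2 /s; field; rewrite !gt_eqF //.
  by rewrite ler_pM2r ?invr_gt0 ?mulr_gt0.
have step1 : (\int[mu]_(x in Omega) (T x `^ (m * p x) / (m * p x))%:E <= \int[mu]_(x in Omega)
   ((K * lam) * (T x `^ (l * p x) / (l * p x)) + c2 * (1 / p x))%:E)%E.
  apply: ge0_le_integral => //.
  - by move=> x Ox; rewrite lee_fin divr_ge0 ?powR_ge0 // mulr_ge0 // ltW // p0.
  - by apply/measurable_EFinP; exact: mF.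
  - apply/measurable_EFinP; apply: measurable_funD.
      by apply: measurable_funM; [exact: measurable_cst| exact: mF].
    by apply: measurable_funM; [exact: measurable_cst| exact: mC].
apply: (le_trans step1).
rewrite (@eq_integral _ _ _ mu Omega (fun x => ((K * lam)%:E * (T x `^ (l * p x) / (l * p x))%:E + c2%:E * (1 / p x)%:E)%E) _); last first.
  by move=> x _; rewrite EFinD !EFinM.
rewrite ge0_integralD //; last 4 first.
- move=> x Ox; rewrite -EFinM lee_fin; apply: mulr_ge0.
    by rewrite mulr_ge0 // ltW.
  by rewrite divr_ge0 ?powR_ge0 // mulr_ge0 // ltW // p0.
- under eq_fun do rewrite -EFinM.
  by apply/measurable_EFinP; apply: measurable_funM; [exact: measurable_cst| exact: mF].
- by move=> x Ox; rewrite -EFinM lee_fin mulr_ge0 // divr_ge0 // ltW // p0.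
- under eq_fun do rewrite -EFinM.
  by apply/measurable_EFinP; apply: measurable_funM; [exact: measurable_cst| exact: mC].
rewrite ge0_integralZl_EFin //; last 3 first.
- by move=> x Ox; rewrite lee_fin divr_ge0 ?powR_ge0 // mulr_ge0 // ltW // p0.
- by apply: measurableT_comp => //; exact: mF.
- by rewrite mulr_ge0 // ltW.
rewrite ge0_integralZl_EFin //; last 2 first.
- by move=> x Ox; rewrite lee_fin divr_ge0 // ltW // p0.
- by apply: measurableT_comp => //; exact: mC.
rewrite aE.
apply: (@le_trans _ _ ((K * lam)%:E * 1 + c2%:E * a%:E)%E).
  apply: leeD => //; apply: lee_pmul => //.
  - by rewrite lee_fin mulr_ge0 // ltW.
  - by apply: integral_ge0 => x Ox; rewrite lee_fin divr_ge0 ?powR_ge0 // mulr_ge0 // ltW // p0.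
by rewrite mule1 -EFinM -EFinD lee_fin.
Qed.
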